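(* Let $P$ be atomic. The sequent $\supset \Box(P\land\lnot\Box P\to P)\to\lnot\Box(P\land\lnot\Box P)$ has no prehistoric-cycle-free G3s proof.
   Context: S4 formulas built from atoms, $\bot$, $\to$, $\Box$, with $\lnot$ and $\land$ (handled either as abbreviations or by the standard G3 rules: $(\lnot\supset)$ from $\Gamma\supset\Delta,A$ infer $\lnot A,\Gamma\supset\Delta$; $(\supset\lnot)$ from $A,\Gamma\supset\Delta$ infer $\Gamma\supset\Delta,\lnot A$; $(\land\supset)$ from $A,B,\Gamma\supset\Delta$ infer $A\land B,\Gamma\supset\Delta$; $(\supset\land)$ from $\Gamma\supset\Delta,A$ and $\Gamma\supset\Delta,B$ infer $\Gamma\supset\Delta,A\land B$). Sequents use finite multisets; $\Box\Gamma:=\{\Box C\mid C\in\Gamma\}$. G3s rules: (Ax) $P,\Gamma\supset\Delta,P$ ($P$ atomic); $(\bot\supset)$ $\bot,\Gamma\supset\Delta$; $(\to\supset)$ from $\Gamma\supset\Delta,A$ and $B,\Gamma\supset\Delta$ infer $A\to B,\Gamma\supset\Delta$; $(\supset\to)$ from $A,\Gamma\supset\Delta,B$ infer $\Gamma\supset\Delta,A\to B$; $(\Box\supset)$ from $A,\Box A,\Gamma\supset\Delta$ infer $\Box A,\Gamma\supset\Delta$; $(\supset\Box)$ from $\Box\Gamma\supset A$ infer $\Gamma',\Box\Gamma\supset\Delta',\Box A$. Correspondence: a symbol occurrence in a side formula (formula repeated unchanged from premise to conclusion) of a premise directly corresponds to the same occurrence in the conclusion; an active formula of a premise directly corresponds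 to its topmost occurrence as a subformula of the principal formula, symbolwise. Families are equivalence classes of $\Box$-occurrences under the reflexive-symmetric-transitive closure. $i\prec j$ if some $(\supset\Box)$ rule whose principal formula $\Box A$ has outermost $\Box$ in family $j$ has a premise containing a $\Box$ of family $i$. A prehistoric cycle is $i_0\prec\cdots\prec i_{n-1}\prec i_0$ ($n\ge1$); a proof is prehistoric-cycle-free if it has none. (Equivalently, in cut-free G3s proofs, one may restrict to families having an occurrence introduced as principal $\Box$ of a $(\supset\Box)$ rule.) *)

(* Defs.v *)
From Stdlib Require Import List Arith Relations.
Import ListNotations.

Inductive form : Type :=
| Atom (n : nat)
| Bot
| Imp (A B : form)
| Box (A : form)
| Neg (A : form)
| And (A B : form).

(** Sequents Gamma ⊃ Delta: finite multisets, represented by lists.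
    The principal formula of a rule is designated by its index. *)
Definition sequent := (list form * list form)%type.

Definition rem {T} (i : nat) (l : list T) : list T := firstn i l ++ skipn (S i) l.

(** Index in the list before removal of the i-th element. *)
Definition unrem (i n : nat) : nat := if n <? i then n else S n.

(** Rule applications.  [i] indexes the antecedent, [j] the succedent.
    In [RBoxR j sel], [sel] lists the (distinct) antecedent indices of the
    boxed formulas Box Gamma kept in the premise; all others form Gamma'. *)
Inductive rule : Type :=
| RAx (i j : nat)
| RBotL (i : nat)
| RImpL (i : nat)
| RImpR (j : nat)
| RBoxL (i : nat)
| RBoxR (j : nat) (sel : list nat)
| RNegL (i : nat)
| RNegR (j : nat)
| RAndL (i : nat)
| RAndR (j : nat).

(** Premises of a rule applied to the conclusion G ⊃ D (None: not applicable).
    Premises are put in a canonical order (active formulas in front of the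
    antecedent / at the end of the succedent). *)
Definition rule_premises (G D : list form) (r : rule) : option (list sequent) :=
  match r with
  | RAx i j =>
      match nth_error G i, nth_error D j with
      | Some (Atom a), Some (Atom b) => if Nat.eqb a b then Some [] else None
      | _, _ => None
      end
  | RBotL i =>
      match nth_error G i with Some Bot => Some [] | _ => None end
  | RImpL i =>
      match nth_error G i with
      | Some (Imp A B) => Some [(rem i G, D ++ [A]); (B :: rem i G, D)]
      | _ => None end
  | RImpR j =>
      match nth_error D j with
      | Some (Imp A B) => Some [(A :: G, rem j D ++ [B])]
      | _ => None end
  | RBoxL i =>
      match nth_error G i with
      | Some (Box A) => Some [(A :: G, D)]
      | _ => None end
  | RBoxR j sel =>
      match nth_error D j with
      | Some (Box A) => Some [(map (fun s => nth s G Bot) sel, [A])]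
      | _ => None end
  | RNegL i =>
      match nth_error G i with
      | Some (Neg A) => Some [(rem i G, D ++ [A])]
      | _ => None end
  | RNegR j =>
      match nth_error D j with
      | Some (Neg A) => Some [(A :: G, rem j D)]
      | _ => None end
  | RAndL i =>
      match nth_error G i with
      | Some (And A B) => Some [(A :: B :: rem i G, D)]
      | _ => None end
  | RAndR j =>
      match nth_error D j with
      | Some (And A B) => Some [(G, rem j D ++ [A]); (G, rem j D ++ [B])]
      | _ => None end
  end.

Definition side_ok (G : list form) (r : rule) : Prop :=
  match r with
  | RBoxR _ sel =>
      NoDup sel /\ Forall (fun s => exists B, nth_error G s = Some (Box B)) sel
  | _ => True
  end.

Inductive proof : Type :=
| PNode (G D : list form) (r : rule) (subs : list proof).

Definition concl (pf : proof) : sequent :=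
  match pf with PNode G D _ _ => (G, D) end.

Inductive valid : proof -> Prop :=
| valid_node G D r subs ps :
    rule_premises G D r = Some ps ->
    side_ok G r ->
    map concl subs = ps ->
    (forall q, In q subs -> valid q) ->
    valid (PNode G D r subs).

Fixpoint subproof (pf : proof) (a : list nat) : option proof :=
  match a with
  | [] => Some pf
  | k :: a' =>
      match pf with
      | PNode _ _ _ subs =>
          match nth_error subs k with
          | Some q => subproof q a'
          | None => None
          end
      end
  end.

(** Subformula at a path (0 = left/only immediate subformula, 1 = right). *)
Fixpoint subf (A : form) (p : list nat) : option form :=
  match p with
  | [] => Some A
  | k :: p' =>
      match A, k with
      | Imp B _, 0 => subf B p'
      | Imp _ C, 1 => subf C p'
      | Box B, 0 => subf B p'
      | Neg B, 0 => subf B p'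
      | And B _, 0 => subf B p'
      | And _ C, 1 => subf C p'
      | _, _ => None
      end
  end.

(** A symbol location: node address, side (true = antecedent,
    false = succedent), index of the formula occurrence in that side,
    path to the symbol (its subformula) inside the formula. *)
Definition loc := (list nat * bool * nat * list nat)%type.

Definition formula_at (pf : proof) (l : loc) : option form :=
  match l with
  | (a, s, n, p) =>
      match subproof pf a with
      | Some (PNode G D _ _) =>
          match nth_error (if s then G else D) n with
          | Some A => subf A p
          | None => None
          end
      | None => None
      end
  end.

Definition is_box_occ (pf : proof) (l : loc) : Prop :=
  exists B, formula_at pf l = Some (Box B).

(** Direct correspondence: a symbol at (side s, index n, path p) in premise
    number k of a rule [r] with conclusion G ⊃ D corresponds to the returned
    location in the conclusion.  Side formulas correspond to themselves;
    active formulas to their occurrence as subformula of the principal one. *)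
Definition corr (G D : list form) (r : rule) (k : nat)
  (s : bool) (n : nat) (p : list nat) : option (bool * nat * list nat) :=
  match r with
  | RAx _ _ | RBotL _ => None
  | RImpL i =>
      match k with
      | 0 => if s then Some (true, unrem i n, p)
             else if n <? length D then Some (false, n, p)
             else Some (true, i, 0 :: p)
      | _ => if s then match n with
                       | 0 => Some (true, i, 1 :: p)
                       | S m => Some (true, unrem i m, p)
                       end
             else Some (false, n, p)
      end
  | RImpR j =>
      if s then match n with
                | 0 => Some (false, j, 0 :: p)
                | S m => Some (true, m, p)
                end
      else if n <? length D - 1 then Some (false, unrem j n, p)
      else Some (false, j, 1 :: p)
  | RBoxL i =>
      if s then match n with
                | 0 => Some (true, i, 0 :: p)
                | S m => Some (true, m, p)
                end
      else Some (false, n, p)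
  | RBoxR j sel =>
      if s then Some (true, nth n sel 0, p) else Some (false, j, 0 :: p)
  | RNegL i =>
      if s then Some (true, unrem i n, p)
      else if n <? length D then Some (false, n, p)
      else Some (true, i, 0 :: p)
  | RNegR j =>
      if s then match n with
                | 0 => Some (false, j, 0 :: p)
                | S m => Some (true, m, p)
                end
      else Some (false, unrem j n, p)
  | RAndL i =>
      if s then match n with
                | 0 => Some (true, i, 0 :: p)
                | 1 => Some (true, i, 1 :: p)
                | S (S m) => Some (true, unrem i m, p)
                end
      else Some (false, n, p)
  | RAndR j =>
      if s then Some (true, n, p)
      else if n <? length D - 1 then Some (false, unrem j n, p)
      else Some (false, j, (match k with 0 => 0 | _ => 1 end) :: p)
  end.

Definition dcorr (pf : proof) (l1 l2 : loc) : Prop :=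
  is_box_occ pf l1 /\ is_box_occ pf l2 /\
  exists a k s n p G D r subs s' n' p',
    l1 = (a ++ [k], s, n, p) /\ l2 = (a, s', n', p') /\
    subproof pf a = Some (PNode G D r subs) /\
    corr G D r k s n p = Some (s', n', p').

Definition same_family (pf : proof) : relation loc :=
  clos_refl_sym_trans loc (dcorr pf).

(** [prec pf l1 l2]: family of l1 ≺ family of l2, i.e. some (⊃□) rule whose
    principal □ is in the family of l2 has a premise containing a □ in the
    family of l1. *)
Definition prec (pf : proof) (l1 l2 : loc) : Prop :=
  is_box_occ pf l1 /\ is_box_occ pf l2 /\
  exists a j sel G D subs s n p,
    subproof pf a = Some (PNode G D (RBoxR j sel) subs) /\
    same_family pf l2 (a, false, j, []) /\
    is_box_occ pf (a ++ [0], s, n, p) /\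
    same_family pf l1 (a ++ [0], s, n, p).

Definition has_prehistoric_cycle (pf : proof) : Prop :=
  exists l, is_box_occ pf l /\ clos_trans loc (prec pf) l l.

Definition prehistoric_cycle_free (pf : proof) : Prop :=
  ~ has_prehistoric_cycle pf.

Definition target (P : nat) : form :=
  Imp (Box (Imp (And (Atom P) (Neg (Box (Atom P)))) (Atom P)))
      (Neg (Box (And (Atom P) (Neg (Box (Atom P)))))).

(* Main.v *)
Require Import Defs.
From Stdlib Require Import List Arith Lia Relations Bool.
Import ListNotations.

Lemma rem_split {T} (l1 l2 : list T) a : rem (length l1) (l1 ++ a :: l2) = l1 ++ l2.
Proof.
  unfold rem. rewrite firstn_app, Nat.sub_diag, firstn_all. simpl.
  rewrite app_nil_r. f_equal. induction l1; simpl; auto.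
Qed.

Lemma rem_in {T} i (l : list T) x : In x (rem i l) -> In x l.
Proof.
  unfold rem. intro H. apply in_app_or in H. destruct H as [H|H].
  - rewrite <- (firstn_skipn i l). apply in_or_app; auto.
  - rewrite <- (firstn_skipn (S i) l). apply in_or_app; auto.
Qed.

Lemma in_rem {T} i (l : list T) y x : nth_error l i = Some y -> In x l -> x = y \/ In x (rem i l).
Proof.
  intros H Hx. destruct (nth_error_split l i H) as [l1 [l2 [E L]]]. subst.
  rewrite rem_split. apply in_app_or in Hx. destruct Hx as [Hx|[Hx|Hx]]; auto with datatypes.
Qed.

Lemma nth_error_rem {T} i (l : list T) m : nth_error (rem i l) m = nth_error l (unrem i m).
Proof.
  unfold rem, unrem. destruct (Nat.ltb_spec m i).
  - destruct (Nat.lt_ge_cases i (length l)).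
    + rewrite nth_error_app1. rewrite nth_error_firstn. destruct (Nat.ltb_spec m i); [reflexivity|lia].
      rewrite length_firstn. lia.
    + rewrite firstn_all2 by lia. rewrite skipn_all2 by lia. rewrite app_nil_r. reflexivity.
  - destruct (Nat.lt_ge_cases i (length l)).
    + rewrite nth_error_app2; rewrite length_firstn; [|lia].
      rewrite nth_error_skipn. f_equal. lia.
    + rewrite firstn_all2 by lia. rewrite skipn_all2 by lia. rewrite app_nil_r.
      rewrite (proj2 (nth_error_None l m)) by lia. rewrite (proj2 (nth_error_None l (S m))) by lia. reflexivity.
Qed.

Lemma length_rem {T} i (l : list T) : i < length l -> length (rem i l) = length l - 1.
Proof.
  intro H. unfold rem. rewrite length_app, length_firstn, length_skipn. lia.
Qed.

Lemma nth_error_app_last {T} (l : list T) x n y : nth_error (l ++ [x]) n = Some y ->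
  (n < length l /\ nth_error l n = Some y) \/ (n = length l /\ y = x).
Proof.
  intro H. destruct (Nat.lt_ge_cases n (length l)).
  - left. split; auto. rewrite nth_error_app1 in H; auto.
  - right. rewrite nth_error_app2 in H by auto. destruct (n - length l) eqn:E; simpl in H.
    + inversion H; split; auto; lia.
    + destruct n0; discriminate.
Qed.

Fixpoint polf (F : form) (p : list nat) (b : bool) : bool :=
  match p with
  | [] => b
  | k :: p' =>
      match F, k with
      | Imp B _, 0 => polf B p' (negb b)
      | Imp _ C, 1 => polf C p' b
      | Box B, 0 => polf B p' b
      | Neg B, 0 => polf B p' (negb b)
      | And B _, 0 => polf B p' b
      | And _ C, 1 => polf C p' b
      | _, _ => b
      end
  end.

Lemma subf_app F p1 p2 G : subf F p1 = Some G -> subf F (p1 ++ p2) = subf G p2.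
Proof.
  revert F. induction p1 as [|k p1 IH]; intros F H; simpl in *.
  - destruct F; simpl in H; inversion H; subst; reflexivity.
  - destruct F; destruct k as [|[|k]]; simpl in *; try discriminate; auto.
Qed.

Lemma polf_app F p1 p2 G b : subf F p1 = Some G -> polf F (p1 ++ p2) b = polf G p2 (polf F p1 b).
Proof.
  revert F b. induction p1 as [|k p1 IH]; intros F b H; simpl in *.
  - destruct F; simpl in H; inversion H; subst; reflexivity.
  - destruct F; destruct k as [|[|k]]; simpl in *; try discriminate; auto.
Qed.

Lemma corr_app G D r k s n q :
  corr G D r k s n q = match corr G D r k s n [] with
                       | Some (s', n', p') => Some (s', n', p' ++ q) | None => None end.
Proof.
  destruct r; simpl;
  repeat match goal with |- context [match ?x with _ => _ end] => destruct x end; reflexivity.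
Qed.

Lemma subf_nil F : subf F [] = Some F.
Proof. destruct F; reflexivity. Qed.
Lemma polf_nil F b : polf F [] b = b.
Proof. destruct F; reflexivity. Qed.


Lemma step (G D : list form) (r : rule) (ps : list sequent) (k : nat) (Gc Dc : list form) (s : bool) (n : nat) (F : form) :
  rule_premises G D r = Some ps -> side_ok G r -> nth_error ps k = Some (Gc, Dc) ->
  nth_error (if s then Gc else Dc) n = Some F ->
  exists s' n' p' F', corr G D r k s n [] = Some (s', n', p') /\
    nth_error (if s' then G else D) n' = Some F' /\ subf F' p' = Some F /\ polf F' p' s' = s.
Proof.
  intros Hr Hs Hk HF.
  Ltac fin := do 4 eexists; split; [reflexivity|]; split; [eassumption|]; split; simpl; rewrite ?subf_nil, ?polf_nil; reflexivity.
  destruct r; simpl in Hr.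
  - destruct (nth_error G i) as [[]|]; try discriminate;
    destruct (nth_error D j) as [[]|]; try discriminate;
    destruct (Nat.eqb _ _); inversion Hr; subst; destruct k; discriminate.
  - destruct (nth_error G i) as [[]|]; try discriminate; inversion Hr; subst; destruct k; discriminate.
  - destruct (nth_error G i) as [[]|] eqn:Ei; try discriminate; inversion Hr; subst.
    destruct k as [|[|k]]; simpl in Hk; inversion Hk; subst; clear Hk; simpl.
    + destruct s.
      * rewrite nth_error_rem in HF. fin.
      * apply nth_error_app_last in HF. destruct HF as [[L E]|[L E]].
        -- apply Nat.ltb_lt in L. rewrite L. fin.
        -- subst. rewrite Nat.ltb_irrefl. fin.
    + destruct s.
      * destruct n as [|m]; simpl in HF.
        -- inversion HF; subst. fin.
        -- rewrite nth_error_rem in HF. fin.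
      * fin.
    + destruct k; discriminate.
  -
    destruct (nth_error D j) as [[]|] eqn:Ej; try discriminate; inversion Hr; subst.
    assert (Lj : j < length D) by (apply nth_error_Some; congruence).
    destruct k as [|k]; simpl in Hk; [|destruct k; discriminate]. inversion Hk; subst; clear Hk; simpl.
    destruct s.
    + destruct n as [|m]; simpl in HF.
      * inversion HF; subst. fin.
      * fin.
    + apply nth_error_app_last in HF. rewrite length_rem in HF by auto. destruct HF as [[L E]|[L E]].
      * apply Nat.ltb_lt in L. rewrite L. rewrite nth_error_rem in E. fin.
      * subst. rewrite Nat.ltb_irrefl. fin.
  -
    destruct (nth_error G i) as [[]|] eqn:Ei; try discriminate; inversion Hr; subst.
    destruct k as [|k]; simpl in Hk; [|destruct k; discriminate]. inversion Hk; subst; clear Hk; simpl.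
    destruct s.
    + destruct n as [|m]; simpl in HF.
      * inversion HF; subst. fin.
      * fin.
    + fin.
  -
    destruct (nth_error D j) as [[]|] eqn:Ej; try discriminate; inversion Hr; subst.
    destruct k as [|k]; simpl in Hk; [|destruct k; discriminate]. inversion Hk; subst; clear Hk; simpl.
    destruct s.
    + rewrite nth_error_map in HF. destruct (nth_error sel n) as [t|] eqn:Et; simpl in HF; [|discriminate].
      inversion HF; subst. rewrite (nth_error_nth sel n 0 Et).
      simpl in Hs. destruct Hs as [_ Hs]. rewrite Forall_forall in Hs.
      destruct (Hs t (nth_error_In _ _ Et)) as [B0 EB].
      rewrite (nth_error_nth G t Bot EB). fin.
    + destruct n as [|[|m]]; simpl in HF; try discriminate. inversion HF; subst. fin.
  -
    destruct (nth_error G i) as [[]|] eqn:Ei; try discriminate; inversion Hr; subst.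
    destruct k as [|k]; simpl in Hk; [|destruct k; discriminate]. inversion Hk; subst; clear Hk; simpl.
    destruct s.
    + rewrite nth_error_rem in HF. fin.
    + apply nth_error_app_last in HF. destruct HF as [[L E]|[L E]].
      * apply Nat.ltb_lt in L. rewrite L. fin.
      * subst. rewrite Nat.ltb_irrefl. fin.
  -
    destruct (nth_error D j) as [[]|] eqn:Ej; try discriminate; inversion Hr; subst.
    destruct k as [|k]; simpl in Hk; [|destruct k; discriminate]. inversion Hk; subst; clear Hk; simpl.
    destruct s.
    + destruct n as [|m]; simpl in HF.
      * inversion HF; subst. fin.
      * fin.
    + rewrite nth_error_rem in HF. fin.
  -
    destruct (nth_error G i) as [[]|] eqn:Ei; try discriminate; inversion Hr; subst.
    destruct k as [|k]; simpl in Hk; [|destruct k; discriminate]. inversion Hk; subst; clear Hk; simpl.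
    destruct s.
    + destruct n as [|[|m]]; simpl in HF.
      * inversion HF; subst. fin.
      * inversion HF; subst. fin.
      * rewrite nth_error_rem in HF. fin.
    + fin.
  -
    destruct (nth_error D j) as [[]|] eqn:Ej; try discriminate; inversion Hr; subst.
    assert (Lj : j < length D) by (apply nth_error_Some; congruence).
    destruct k as [|[|k]]; simpl in Hk; [| |destruct k; discriminate]; inversion Hk; subst; clear Hk; simpl;
    (destruct s;
    [ fin
    | apply nth_error_app_last in HF; rewrite length_rem in HF by auto; destruct HF as [[L E]|[L E]];
      [ apply Nat.ltb_lt in L; rewrite L; rewrite nth_error_rem in E; fin
      | subst; rewrite Nat.ltb_irrefl; fin ]]).
Qed.


Lemma subproof_app pf a b : subproof pf (a ++ b) =
  match subproof pf a with Some q => subproof q b | None => None end.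
Proof.
  revert pf. induction a as [|k a IH]; intros pf; simpl; auto.
  destruct pf as [G D r subs]. destruct (nth_error subs k); auto.
Qed.

Lemma valid_sub pf a q : valid pf -> subproof pf a = Some q -> valid q.
Proof.
  revert pf. induction a as [|k a IH]; intros pf Hv H; simpl in H.
  - inversion H; subst; auto.
  - destruct pf as [G D r subs]. destruct (nth_error subs k) eqn:E; try discriminate.
    inversion Hv; subst. apply (IH p); auto. match goal with Hq : forall q, In q subs -> valid q |- _ => apply Hq end. eapply nth_error_In; eauto.
Qed.

Definition traced (T : form) (pf : proof) (a : list nat) (s : bool) (n : nat) (F : form) :=
  exists rp, subf T rp = Some F /\ polf T rp false = s /\
    forall q B, subf F q = Some (Box B) -> same_family pf (a, s, n, q) ([], false, 0, rp ++ q).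

Lemma trace T pf : valid pf -> concl pf = ([], [T]) ->
  forall a G D r subs, subproof pf a = Some (PNode G D r subs) ->
  forall (s : bool) n F, nth_error (if s then G else D) n = Some F -> traced T pf a s n F.
Proof.
  intros Hv Hc a. induction a as [|k a IH] using rev_ind; intros G D r subs Hs s n F HF.
  - simpl in Hs. inversion Hs; subst. simpl in Hc. inversion Hc; subst.
    destruct s; simpl in HF. { destruct n; discriminate. }
    destruct n as [|[|n]]; simpl in HF; try discriminate. inversion HF; subst.
    exists []. split; [apply subf_nil|]. split; [apply polf_nil|].
    intros q B _. apply rst_refl.
  - rewrite subproof_app in Hs. destruct (subproof pf a) as [[G0 D0 r0 subs0]|] eqn:Ea; try discriminate.
    simpl in Hs. destruct (nth_error subs0 k) as [child|] eqn:Ek; try discriminate.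
    inversion Hs; subst child.
    pose proof (valid_sub _ _ _ Hv Ea) as Hv0. inversion Hv0; subst.
    match goal with H1 : rule_premises _ _ _ = Some _, H2 : side_ok _ _ |- _ => rename H1 into Hr0; rename H2 into Hs0 end.
    assert (Hk : nth_error (map concl subs0) k = Some (G, D)).
    { rewrite nth_error_map, Ek. reflexivity. }
    destruct (step _ _ _ _ _ _ _ _ _ _ Hr0 Hs0 Hk HF) as [s' [n' [p' [F' [Hcorr [HF' [Hsub Hpol]]]]]]].
    destruct (IH _ _ _ _ eq_refl s' n' F' HF') as [rp' [Hs1 [Hp1 Hf1]]].
    exists (rp' ++ p'). split; [rewrite (subf_app _ _ _ _ Hs1); auto|].
    split; [rewrite (polf_app _ _ _ _ _ Hs1), Hp1; auto|].
    intros q B HB.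
    apply rst_trans with (a, s', n', p' ++ q).
    + apply rst_step. unfold dcorr. split; [|split].
      * exists B. unfold formula_at. rewrite subproof_app, Ea. simpl. rewrite Ek. simpl.
        rewrite HF. auto.
      * exists B. unfold formula_at. rewrite Ea. rewrite HF'. rewrite (subf_app _ _ _ _ Hsub). auto.
      * exists a, k, s, n, q, G0, D0, r0, subs0, s', n', (p' ++ q).
        split; auto. split; auto. split; auto. rewrite corr_app, Hcorr. auto.
    + rewrite <- app_assoc. apply (Hf1 _ B). rewrite (subf_app _ _ _ _ Hsub). auto.
Qed.


Fixpoint allsub (F : form) : list (list nat * form) :=
  ([], F) :: match F with
  | Imp B C | And B C => map (fun pg => (0 :: fst pg, snd pg)) (allsub B) ++
                         map (fun pg => (1 :: fst pg, snd pg)) (allsub C)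
  | Box B | Neg B => map (fun pg => (0 :: fst pg, snd pg)) (allsub B)
  | _ => []
  end.

Lemma subf_allsub p : forall F G, subf F p = Some G -> In (p, G) (allsub F).
Proof.
  induction p as [|k p IH]; intros F G H.
  - rewrite subf_nil in H. inversion H; subst. destruct G; simpl; auto.
  - destruct F; destruct k as [|[|k]]; simpl in H; try discriminate;
    simpl; right; try apply in_or_app;
    first [ left; apply (in_map (fun pg => (0 :: fst pg, snd pg)) _ (p, G)); auto
          | right; apply (in_map (fun pg => (1 :: fst pg, snd pg)) _ (p, G)); auto
          | apply (in_map (fun pg => (0 :: fst pg, snd pg)) _ (p, G)); auto ].
Qed.

Lemma target_box P rp C : subf (target P) rp = Some (Box C) -> polf (target P) rp false = false ->
  (forall X Y, C <> And X Y) -> rp = [1;0;0;1;0].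
Proof.
  intros H Hp HA. apply subf_allsub in H. simpl in H.
  repeat (destruct H as [H|H]; [inversion H; subst; simpl in Hp; try discriminate; auto;
     try (exfalso; eapply HA; reflexivity)|]).
  destruct H.
Qed.

Lemma target_boxand P rp X Y : subf (target P) rp = Some (Box (And X Y)) ->
  rp = [1;0] /\ X = Atom P /\ Y = Neg (Box (Atom P)).
Proof.
  intros H. apply subf_allsub in H. simpl in H.
  repeat (destruct H as [H|H]; [inversion H; subst; auto|]).
  destruct H.
Qed.


Lemma unclean_cycle P pf a G D j sel subs C t X Y :
  valid pf -> concl pf = ([], [target P]) ->
  subproof pf a = Some (PNode G D (RBoxR j sel) subs) ->
  nth_error D j = Some (Box C) -> (forall X Y, C <> And X Y) ->
  In t sel -> nth t G Bot = Box (And X Y) -> has_prehistoric_cycle pf.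
Proof.
  intros Hv Hc Ha HC HnA Ht Hnt.
  pose proof (valid_sub _ _ _ Hv Ha) as Hv0. inversion Hv0; subst.
  match goal with H : rule_premises _ _ _ = Some _ |- _ => rename H into Hr end.
  simpl in Hr. rewrite HC in Hr. inversion Hr as [Hm].
  destruct subs as [|child subs']; simpl in Hm; try discriminate.
  destruct child as [Gc Dc rc sc]. simpl in Hm. inversion Hm; subst Gc Dc.
  destruct (In_nth_error _ _ Ht) as [kk Ekk].
  assert (Hchild : subproof pf (a ++ [0]) = Some (PNode (map (fun s => nth s G Bot) sel) [C] rc sc)).
  { rewrite subproof_app, Ha. reflexivity. }
  assert (Ekk' : nth_error (if true then map (fun s => nth s G Bot) sel else [C]) kk = Some (Box (And X Y))).
  { simpl. rewrite nth_error_map, Ekk. simpl. rewrite Hnt. reflexivity. }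
  destruct (trace _ _ Hv Hc _ _ _ _ _ Hchild true kk _ Ekk') as [rp2 [S2 [_ F2]]].
  destruct (target_boxand _ _ _ _ S2) as [-> [-> ->]].
  destruct (trace _ _ Hv Hc _ _ _ _ _ Ha false j _ HC) as [rp1 [S1 [P1 F1]]].
  pose proof (target_box _ _ _ S1 P1 HnA) as ->.
  set (l := (a, false, j, @nil nat)).
  set (l2 := (a ++ [0], true, kk, [0;1;0])).
  assert (Bl : is_box_occ pf l).
  { exists C. unfold formula_at, l. rewrite Ha. rewrite HC. apply subf_nil. }
  assert (Bl2 : is_box_occ pf l2).
  { exists (Atom P). unfold formula_at, l2. rewrite Hchild. simpl. rewrite nth_error_map, Ekk. simpl.
    rewrite Hnt. reflexivity. }
  assert (Sf : same_family pf l l2).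
  { apply rst_trans with ([], false, 0, [1;0;0;1;0]).
    - apply (F1 [] C). apply subf_nil.
    - apply rst_sym. apply (F2 [0;1;0] (Atom P)). reflexivity. }
  exists l. split; auto. apply t_step.
  split; auto. split; auto.
  exists a, j, sel, G, D, (PNode (map (fun s => nth s G Bot) sel) [C] rc sc :: subs'), true, kk, [0;1;0].
  split; auto. split; [apply rst_refl|]. split; auto.
Qed.


Fixpoint ev (w : bool) (F : form) : bool :=
  match F with
  | Atom _ => negb w
  | Bot => false
  | Imp A B => implb (ev w A) (ev w B)
  | Box A => match A with
             | And _ _ => ev w A
             | _ => ev w A && (w || ev true A)
             end
  | Neg A => negb (ev w A)
  | And A B => ev w A && ev w B
  end.

Definition seqv (sq : sequent) : Prop :=
  forall w, (forall A, In A (fst sq) -> ev w A = true) -> exists B, In B (snd sq) /\ ev w B = true.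

Definition clean (G D : list form) (j : nat) (sel : list nat) : Prop :=
  forall C, nth_error D j = Some (Box C) -> (forall X Y, C <> And X Y) ->
  forall t, In t sel -> forall X Y, nth t G Bot <> Box (And X Y).

Lemma ev_box_nonand w C : (forall X Y, C <> And X Y) -> ev w (Box C) = ev w C && (w || ev true C).
Proof. intros H. destruct C; simpl; auto. exfalso; eapply H; eauto. Qed.

Lemma ev_box_T w C : ev w (Box C) = true -> ev w C = true.
Proof. destruct C; simpl; intros H; auto; apply andb_true_iff in H; tauto. Qed.

Lemma rule_sound G D r ps :
  rule_premises G D r = Some ps -> side_ok G r ->
  (forall j sel, r = RBoxR j sel -> clean G D j sel) ->
  (forall c, In c ps -> seqv c) -> seqv (G, D).
Proof.
  intros Hr Hs Hcl Hp w HG. simpl in HG. simpl.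
  destruct r; simpl in Hr.
  - destruct (nth_error G i) as [[]|] eqn:Ei; try discriminate;
    destruct (nth_error D j) as [[]|] eqn:Ej; try discriminate.
    exists (Atom n0). split; [eapply nth_error_In; eauto|].
    pose proof (HG _ (nth_error_In _ _ Ei)). simpl in *. auto.
  - destruct (nth_error G i) as [[]|] eqn:Ei; try discriminate.
    pose proof (HG _ (nth_error_In _ _ Ei)). discriminate.
  -
    destruct (nth_error G i) as [[]|] eqn:Ei; try discriminate. inversion Hr; subst.
    pose proof (HG _ (nth_error_In _ _ Ei)) as HI. simpl in HI.
    pose proof (Hp _ (or_introl eq_refl) w) as P1. pose proof (Hp _ (or_intror (or_introl eq_refl)) w) as P2.
    simpl in P1, P2.
    destruct P1 as [B0 [HB0 EB0]]. { intros x Hx. apply HG. eapply rem_in; eauto. }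
    apply in_app_or in HB0. destruct HB0 as [HB0|[HB0|[]]]; [eauto|subst].
    rewrite EB0 in HI. simpl in HI.
    apply P2. intros x [Hx|Hx]; [subst; auto|]. apply HG. eapply rem_in; eauto.
  -
    destruct (nth_error D j) as [[| |A1 A2| | |]|] eqn:Ej; try discriminate. inversion Hr; subst.
    pose proof (Hp _ (or_introl eq_refl) w) as P1. simpl in P1.
    destruct (ev w A1) eqn:EA.
    + destruct P1 as [B0 [HB0 EB0]]. { intros x [Hx|Hx]; [subst; auto|]. auto. }
      apply in_app_or in HB0. destruct HB0 as [HB0|[HB0|[]]].
      * exists B0. split; auto. eapply rem_in; eauto.
      * subst. exists (Imp A1 B0). split; [eapply nth_error_In; eauto|]. simpl. rewrite EB0. destruct (ev w A1); auto.
    + exists (Imp A1 A2). split; [eapply nth_error_In; eauto|]. simpl. rewrite EA. auto.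
  -
    destruct (nth_error G i) as [[]|] eqn:Ei; try discriminate. inversion Hr; subst.
    pose proof (HG _ (nth_error_In _ _ Ei)) as HI. apply ev_box_T in HI.
    pose proof (Hp _ (or_introl eq_refl) w) as P1. simpl in P1.
    apply P1. intros x [Hx|Hx]; [subst; auto|]. auto.
  -
    destruct (nth_error D j) as [[]|] eqn:Ej; try discriminate. inversion Hr; subst.
    simpl in Hs. destruct Hs as [_ Hs]. rewrite Forall_forall in Hs.
    pose proof (Hp _ (or_introl eq_refl)) as P1. simpl in P1.
    assert (Hsel : forall w' x, In x (map (fun s => nth s G Bot) sel) ->
              (forall y, In y G -> ev w' y = true) -> ev w' x = true).
    { intros w' x Hx HG'. apply in_map_iff in Hx. destruct Hx as [t [<- Ht]].
      destruct (Hs t Ht) as [B0 EB]. apply HG'. rewrite (nth_error_nth G t Bot EB).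
      eapply nth_error_In; eauto. }
    assert (Hw : ev w A = true).
    { destruct (P1 w) as [B0 [[<-|[]] EB0]]; auto. }
    exists (Box A). split; [eapply nth_error_In; eauto|].
    destruct (match A with And _ _ => true | _ => false end) eqn:EA.
    + destruct A; try discriminate. simpl. simpl in Hw. auto.
    + assert (HnA : forall X Y, A <> And X Y) by (intros X Y ->; discriminate).
      rewrite ev_box_nonand by auto. rewrite Hw. simpl.
      destruct w; auto. simpl.
      destruct (P1 true) as [B0 [[<-|[]] EB0]]; auto.
      intros x Hx. apply in_map_iff in Hx. destruct Hx as [t [<- Ht]].
      destruct (Hs t Ht) as [B1 EB]. rewrite (nth_error_nth G t Bot EB).
      assert (HnB : forall X Y, B1 <> And X Y).
      { intros X Y ->. apply (Hcl j sel eq_refl A Ej HnA t Ht X Y). rewrite (nth_error_nth G t Bot EB). auto. }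
      pose proof (HG _ (nth_error_In _ _ EB)) as HB. rewrite ev_box_nonand in HB by auto.
      rewrite ev_box_nonand by auto. apply andb_true_iff in HB. destruct HB as [_ HB]. simpl in HB.
      rewrite HB. auto.
  -
    destruct (nth_error G i) as [[]|] eqn:Ei; try discriminate. inversion Hr; subst.
    pose proof (HG _ (nth_error_In _ _ Ei)) as HI. simpl in HI.
    pose proof (Hp _ (or_introl eq_refl) w) as P1. simpl in P1.
    destruct P1 as [B0 [HB0 EB0]]. { intros x Hx. apply HG. eapply rem_in; eauto. }
    apply in_app_or in HB0. destruct HB0 as [HB0|[HB0|[]]]; [eauto|subst].
    rewrite EB0 in HI. discriminate.
  -
    destruct (nth_error D j) as [[]|] eqn:Ej; try discriminate. inversion Hr; subst.
    pose proof (Hp _ (or_introl eq_refl) w) as P1. simpl in P1.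
    destruct (ev w A) eqn:EA.
    + destruct P1 as [B0 [HB0 EB0]]. { intros x [Hx|Hx]; [subst; auto|]. auto. }
      exists B0. split; auto. eapply rem_in; eauto.
    + exists (Neg A). split; [eapply nth_error_In; eauto|]. simpl. rewrite EA. auto.
  -
    destruct (nth_error G i) as [[]|] eqn:Ei; try discriminate. inversion Hr; subst.
    pose proof (HG _ (nth_error_In _ _ Ei)) as HI. simpl in HI. apply andb_true_iff in HI.
    pose proof (Hp _ (or_introl eq_refl) w) as P1. simpl in P1.
    apply P1. intros x [Hx|[Hx|Hx]]; try (subst; tauto). apply HG. eapply rem_in; eauto.
  -
    destruct (nth_error D j) as [[]|] eqn:Ej; try discriminate. inversion Hr; subst.
    pose proof (Hp _ (or_introl eq_refl) w) as P1. pose proof (Hp _ (or_intror (or_introl eq_refl)) w) as P2.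
    simpl in P1, P2.
    destruct (P1 HG) as [B0 [HB0 EB0]]. destruct (P2 HG) as [B1 [HB1 EB1]].
    apply in_app_or in HB0. destruct HB0 as [HB0|[HB0|[]]].
    { exists B0. split; auto. eapply rem_in; eauto. }
    apply in_app_or in HB1. destruct HB1 as [HB1|[HB1|[]]].
    { exists B1. split; auto. eapply rem_in; eauto. }
    subst. exists (And B0 B1). split; [eapply nth_error_In; eauto|]. simpl. rewrite EB0, EB1. auto.
Qed.


Lemma sound pf : valid pf ->
  (forall a G D j sel subs, subproof pf a = Some (PNode G D (RBoxR j sel) subs) -> clean G D j sel) ->
  seqv (concl pf).
Proof.
  induction 1 as [G D r subs ps Hr Hs Hm Hv IH]; intros Hcl.
  simpl. apply (rule_sound G D r ps Hr Hs).
  - intros j sel ->. apply (Hcl [] G D j sel subs). reflexivity.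
  - intros c Hc. subst ps. apply in_map_iff in Hc. destruct Hc as [q [<- Hq]].
    apply IH; auto. intros a G' D' j sel subs' Ha.
    destruct (In_nth_error _ _ Hq) as [i Ei].
    apply (Hcl (i :: a) G' D' j sel subs'). simpl. rewrite Ei. auto.
Qed.

Theorem mainTheorem10 : forall P : nat,
  ~ exists pf : proof,
      valid pf /\ concl pf = ([], [target P]) /\ prehistoric_cycle_free pf.
Proof.
  intros P [pf [Hv [Hc Hcf]]].
  assert (Hcl : forall a G D j sel subs, subproof pf a = Some (PNode G D (RBoxR j sel) subs) -> clean G D j sel).
  { intros a G D j sel subs Ha C HC HnA t Ht X Y Heq. apply Hcf.
    eapply unclean_cycle; eauto. }
  pose proof (sound pf Hv Hcl false) as S. rewrite Hc in S. simpl in S.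
  destruct S as [B [[<-|[]] EB]]. { intros A []. }
  simpl in EB. discriminate.
Qed.
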